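(* Let $X$ be a finitely supported subset of an invariant set such that $\wp_{fs}(X)$ is not FSM Dedekind infinite. Then every finitely supported surjective map $f:X\to X$ is injective.
   Context: Framework (FSM). Work in ZF with a fixed infinite set $A$ of atoms; $S_A$ is the group of bijections of $A$ fixing all but finitely many atoms; $Fix(S)$ is the set of $\pi\in S_A$ fixing each element of $S\subseteq A$; $S$ supports $x$ if $\pi\cdot x=x$ for all $\pi\in Fix(S)$. An invariant set is an $S_A$-set all of whose elements have finite supports; subsets carry $\pi\star Z=\{\pi\cdot z:z\in Z\}$; $\wp_{fs}(X)$ is the set of finitely supported subsets (under $\star$) of the ambient invariant set contained in $X$. A function is finitely supported if there is a finite $S$ such that for all $\pi\in Fix(S)$, $\pi$ preserves domain and codomain and $f(\pi\cdot x)=\pi\cdot f(x)$. A set $Z$ is FSM Dedekind infinite if there is a finitely supported injection from $Z$ onto a finitely supported proper subset of $Z$. *)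

(* Defs.v *)
From Stdlib Require Import List.
Set Implicit Arguments.

Definition infinite_type (A : Type) : Prop :=
  exists e : nat -> A, forall m n, e m = e n -> m = n.

Definition finperm (A : Type) (p : A -> A) : Prop :=
  (exists q : A -> A, (forall a, q (p a) = a) /\ (forall a, p (q a) = a)) /\
  (exists l : list A, forall a, ~ In a l -> p a = a).

Definition fixes (A : Type) (S : list A) (p : A -> A) : Prop :=
  forall a, In a S -> p a = a.

Definition supports (A T : Type) (act : (A -> A) -> T -> T) (S : list A) (x : T) : Prop :=
  forall p, finperm p -> fixes S p -> act p x = x.

Record InvSet (A : Type) := {
  carrier :> Type;
  act : (A -> A) -> carrier -> carrier;
  act_id : forall x, act (fun a => a) x = x;
  act_comp : forall p q x, finperm p -> finperm q ->
      act (fun a => p (q a)) x = act p (act q x);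
  act_fin_supp : forall x, exists S : list A, supports act S x
}.

Definition setact (A T : Type) (act : (A -> A) -> T -> T) (p : A -> A) (Z : T -> Prop)
  : T -> Prop := fun y => exists z, Z z /\ y = act p z.

Definition fs_set (A T : Type) (act : (A -> A) -> T -> T) (Z : T -> Prop) : Prop :=
  exists S : list A, supports (setact act) S Z.

(* wp_fs(X): finitely supported subsets of the ambient set contained in X;
   itself a subset of T -> Prop (acted on by setact). *)
Definition pfs (A T : Type) (act : (A -> A) -> T -> T) (X : T -> Prop) : (T -> Prop) -> Prop :=
  fun Z => fs_set act Z /\ (forall z, Z z -> X z).

Definition fs_fun (A T1 T2 : Type) (act1 : (A -> A) -> T1 -> T1)
  (act2 : (A -> A) -> T2 -> T2) (D : T1 -> Prop) (C : T2 -> Prop) (f : T1 -> T2) : Prop :=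
  exists S : list A, forall p, finperm p -> fixes S p ->
    setact act1 p D = D /\ setact act2 p C = C /\
    (forall x, D x -> f (act1 p x) = act2 p (f x)).

Definition fsm_dedekind_infinite (A T : Type) (act : (A -> A) -> T -> T) (Z : T -> Prop) : Prop :=
  exists (Y : T -> Prop) (g : T -> T),
    fs_set act Y /\
    (forall y, Y y -> Z y) /\ (exists z, Z z /\ ~ Y z) /\
    (forall x, Z x -> Y (g x)) /\
    (forall x y, Z x -> Z y -> g x = g y -> x = y) /\
    (forall y, Y y -> exists x, Z x /\ g x = y) /\
    fs_fun act act Z Y g.

(* Main.v *)
Require Import Defs.
From Stdlib Require Import List.
From Stdlib Require Import Classical FunctionalExtensionality PropExtensionality.
Set Implicit Arguments.

Definition good (A T : Type) (ac : (A -> A) -> T -> T) : Prop :=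
  forall p, finperm p -> exists q, finperm q /\ (forall S, fixes S p -> fixes S q) /\
    (forall x, ac p (ac q x) = x) /\ (forall x, ac q (ac p x) = x).

Lemma pext (T : Type) (P Q : T -> Prop) : (forall x, P x <-> Q x) -> P = Q.
Proof.
  intro H; extensionality x; apply propositional_extensionality; apply H.
Qed.

Lemma finperm_inv (A : Type) (p : A -> A) : finperm p -> exists q, finperm q /\
  (forall a, q (p a) = a) /\ (forall a, p (q a) = a) /\ (forall S, fixes S p -> fixes S q).
Proof.
  intros [[q [H1 H2]] [l Hl]]. exists q. split; [split|split; [|split]]; auto.
  - exists p; split; auto.
  - exists l; intros a Ha. transitivity (q (p a)); [rewrite (Hl a Ha); reflexivity | apply H1].
  - intros S HS a Ha. transitivity (q (p a)); [rewrite (HS a Ha); reflexivity | apply H1].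
Qed.

Lemma act_inv (A : Type) (U : InvSet A) p q : finperm p -> finperm q ->
  (forall a, p (q a) = a) -> forall x, act U p (act U q x) = x.
Proof.
  intros Hp Hq H x. rewrite <- act_comp by assumption.
  replace (fun a => p (q a)) with (fun a : A => a) by (extensionality a; auto).
  apply act_id.
Qed.

Lemma good_U (A : Type) (U : InvSet A) : good (act U).
Proof.
  intros p Hp. destruct (finperm_inv Hp) as [q [Hq [H1 [H2 H3]]]].
  exists q; split; [auto|split; [auto|split; intros; apply act_inv; auto]].
Qed.

Lemma good_set (A T : Type) (ac : (A -> A) -> T -> T) : good ac -> good (setact ac).
Proof.
  intros G p Hp. destruct (G p Hp) as [q [Hq [Hf [H1 H2]]]].
  exists q; split; [auto|split; [auto|]]. split; intro Z; apply pext; intro y; split.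
  - intros [z [[w [Hw ->]] ->]]. rewrite H1; auto.
  - intro Hy. exists (ac q y). split; [exists y; split; auto | symmetry; apply H1].
  - intros [z [[w [Hw ->]] ->]]. rewrite H2; auto.
  - intro Hy. exists (ac p y). split; [exists y; split; auto | symmetry; apply H2].
Qed.

Lemma supp_intro (A T : Type) (ac : (A -> A) -> T -> T) S Z : good ac ->
  (forall p, finperm p -> fixes S p -> forall z, Z z -> Z (ac p z)) ->
  supports (setact ac) S Z.
Proof.
  intros G H p Hp Hf. destruct (G p Hp) as [q [Hq [Hfq [H1 H2]]]].
  apply pext; intro y; split.
  - intros [z [Hz ->]]. apply H; auto.
  - intro Hy. exists (ac q y). split; [apply H; auto | symmetry; apply H1].
Qed.

Lemma inv_elim (A T : Type) (ac : (A -> A) -> T -> T) p Z z :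
  setact ac p Z = Z -> Z z -> Z (ac p z).
Proof. intros E Hz. rewrite <- E. exists z; auto. Qed.

Lemma supp_elim (A T : Type) (ac : (A -> A) -> T -> T) S Z p z :
  supports (setact ac) S Z -> finperm p -> fixes S p -> Z z -> Z (ac p z).
Proof. intros H Hp Hf. apply inv_elim. apply H; auto. Qed.
Arguments supp_elim {A T ac S Z p z}.

Lemma fixes_app (A : Type) (S1 S2 : list A) p : fixes (S1 ++ S2) p -> fixes S1 p /\ fixes S2 p.
Proof. intro H; split; intros a Ha; apply H; apply in_or_app; auto. Qed.

Lemma finperm_comp (A : Type) (p r : A -> A) : finperm p -> finperm r -> finperm (fun a => p (r a)).
Proof.
  intros [[qp [Hp1 Hp2]] [l1 Hl1]] [[qr [Hr1 Hr2]] [l2 Hl2]]. split.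
  - exists (fun a => qr (qp a)). split; intro a; [rewrite Hp1; auto | rewrite Hr2; auto].
  - exists (l1 ++ l2). intros a Ha. rewrite Hl2, Hl1; auto; intro; apply Ha; apply in_or_app; auto.
Qed.

Lemma act_comp3 (A : Type) (U : InvSet A) p r s x : finperm p -> finperm r -> finperm s ->
  act U (fun a => p (r (s a))) x = act U p (act U r (act U s x)).
Proof.
  intros. transitivity (act U p (act U (fun a => r (s a)) x)).
  - apply (@act_comp A U p (fun a => r (s a)) x); auto. apply finperm_comp; auto.
  - f_equal. apply act_comp; auto.
Qed.

Lemma fs_setact (A : Type) (U : InvSet A) (W : U -> Prop) p :
  fs_set (act U) W -> finperm p -> fs_set (act U) (setact (act U) p W).
Proof.
  intros [S HS] Hp. destruct (finperm_inv Hp) as [q [Hq [Hqp [Hpq _]]]].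
  exists (map p S). apply supp_intro; [apply good_U|].
  intros r Hr Hfix z [w [Hw ->]].
  exists (act U q (act U r (act U p w))). split.
  - rewrite <- act_comp3 by auto. apply (supp_elim HS); auto.
    + apply finperm_comp; auto. apply finperm_comp; auto.
    + intros a Ha. rewrite (Hfix (p a)); auto. apply in_map; auto.
  - symmetry. apply act_inv; auto.
Qed.

Theorem mainTheorem13 (A : Type) (HA : infinite_type A) (U : InvSet A)
  (X : U -> Prop) (HX : fs_set (act U) X)
  (HP : ~ fsm_dedekind_infinite (setact (act U)) (pfs (act U) X))
  (f : U -> U) (Hmaps : forall x, X x -> X (f x))
  (Hfs : fs_fun (act U) (act U) X X f)
  (Hsurj : forall y, X y -> exists x, X x /\ f x = y) :
  forall x y, X x -> X y -> f x = f y -> x = y.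
Proof.
  intros x y Hx Hy Hfxy. destruct (classic (x = y)) as [|Hne]; auto. exfalso. apply HP.
  destruct HX as [SX HSX]. destruct Hfs as [Sf HSf].
  assert (Xfw : forall p, finperm p -> fixes Sf p -> forall z, X z -> X (act U p z)).
  { intros p Hp Hf z Hz. apply inv_elim; auto. apply (HSf p Hp Hf). }
  assert (feq : forall p, finperm p -> fixes Sf p -> forall z, X z -> f (act U p z) = act U p (f z)).
  { intros p Hp Hf z Hz. apply (HSf p Hp Hf); auto. }
  set (g := fun (V : U -> Prop) (z : U) => X z /\ V (f z)).
  set (Y := fun W : U -> Prop => pfs (act U) X W /\
               (forall u v, X u -> X v -> f u = f v -> W u -> W v)).
  assert (HYs : supports (setact (setact (act U))) Sf Y).
  { apply supp_intro; [apply good_set, good_U|].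
    intros p Hp Hfix W [[HW Wsub] Wsat].
    destruct (@good_U A U p Hp) as [q [Hq [Hfq [Hpq Hqp]]]].
    split; [split|].
    - apply fs_setact; auto.
    - intros z [w [Hw ->]]. apply Xfw; auto.
    - intros u v Hu Hv Huv [w [Hw ->]]. exists (act U q v).
      split; [| symmetry; auto].
      assert (Hw' : X w) by auto.
      assert (Hqv : X (act U q v)) by (apply Xfw; auto).
      apply Wsat with w; auto.
      assert (E : f v = act U p (f (act U q v))).
      { rewrite <- feq; auto. rewrite Hpq; auto. }
      rewrite feq in Huv; auto. rewrite E in Huv.
      apply (f_equal (act U q)) in Huv. rewrite !Hqp in Huv. auto. }
  assert (Hpfs : supports (setact (setact (act U))) SX (pfs (act U) X)).
  { apply supp_intro; [apply good_set, good_U|].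
    intros p Hp Hf W [HW Wsub]. split.
    - apply fs_setact; auto.
    - intros z [w [Hw ->]]. apply (supp_elim HSX); auto. }
  exists Y, g. split; [|split; [|split; [|split; [|split; [|split]]]]].
  - exists Sf; auto.
  - intros W [H _]; exact H.
  - exists (fun z => z = x). split.
    + split.
      * destruct (act_fin_supp U x) as [Sx HSx]. exists Sx.
        apply supp_intro; [apply good_U|]. intros p Hp Hf z ->. apply HSx; auto.
      * intros z ->; auto.
    + intros [_ Hsat]. apply Hne. symmetry. apply (Hsat x y Hx Hy Hfxy). reflexivity.
  - intros V [[SV HSV] Vsub]. split; [split|].
    + exists (SV ++ Sf). apply supp_intro; [apply good_U|].
      intros p Hp Hfix z [Hz Hv]. destruct (fixes_app _ _ Hfix) as [H1 H2].
      split; [apply Xfw; auto|]. unfold g. rewrite feq; auto. apply (supp_elim HSV); auto.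
    + intros z [Hz _]; auto.
    + intros u v Hu Hv Huv [_ Hvu]. split; auto. rewrite <- Huv; auto.
  - intros V W [_ Vs] [_ Ws] Hg. apply pext; intros z; split; intro Hz.
    + destruct (Hsurj z (Vs z Hz)) as [u [Hu <-]].
      assert (H : g V u) by (split; auto). rewrite Hg in H. destruct H; auto.
    + destruct (Hsurj z (Ws z Hz)) as [u [Hu <-]].
      assert (H : g W u) by (split; auto). rewrite <- Hg in H. destruct H; auto.
  - intros W [[HW Wsub] Wsat]. exists (fun v => exists u, W u /\ f u = v). split; [split|].
    + destruct HW as [SW HSW]. exists (SW ++ Sf). apply supp_intro; [apply good_U|].
      intros p Hp Hfix z [u [Hu <-]]. destruct (fixes_app _ _ Hfix) as [H1 H2].
      exists (act U p u). split; [apply (supp_elim HSW); auto | apply feq; auto].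
    + intros z [u [Hu <-]]. auto.
    + apply pext; intro z; split.
      * intros [Hz [u [Hu Hfu]]]. apply Wsat with u; auto.
      * intros Hz; split; [auto|]. exists z; auto.
  - exists (SX ++ Sf). intros p Hp Hfix. destruct (fixes_app _ _ Hfix) as [H1 H2].
    split; [|split].
    + apply Hpfs; auto.
    + apply HYs; auto.
    + intros V [_ Vsub].
      destruct (@good_U A U p Hp) as [q [Hq [Hfq [Hpq Hqp]]]].
      apply pext; intro z; split.
      * intros [Hz [v [Hv Hfz]]]. exists (act U q z). split; [split|].
        -- apply Xfw; auto.
        -- rewrite feq; auto. rewrite Hfz, Hqp; auto.
        -- symmetry; auto.
      * intros [w [[Hw Hvw] ->]]. split; [apply Xfw; auto|].
        exists (f w). split; auto.
Qed.
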